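(* Let $M$ be a finite monoid and $k$ a field. Suppose there exist two irreducible elements $p,q\in M$ that are not associates. Define $f: M\to k[x,y]/\langle x^2,y^2,xy\rangle$ by $$f(m)=\begin{cases}1 & \text{if } m \text{ is a unit},\\ x & \text{if } m \text{ and } p \text{ are associates},\\ y & \text{if } m \text{ and } q \text{ are associates},\\ 0 & \text{otherwise}.\end{cases}$$ Then $f$ is a well-defined homomorphism of monoids (into the multiplicative monoid of the algebra), and it induces a surjective $k$-algebra homomorphism from the monoid algebra $kM$ onto $k[x,y]/\langle x^2,y^2,xy\rangle$.
   Context: A non-unit $p$ in a monoid $M$ is irreducible if whenever $p=ab$ with $a,b\in M$, then $a$ is a unit or $b$ is a unit. Two elements $a,b\in M$ are associates if there exist units $u,v\in M$ with $a=ubv$. $kM$ denotes the monoid algebra of $M$ over $k$. *)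

(* Defs.v *)
From HB Require Import structures.
From mathcomp Require Import all_boot all_order all_algebra.
From mathcomp Require Import mpoly.
Set Implicit Arguments. Unset Strict Implicit. Unset Printing Implicit Defensive.
Import GRing.Theory.
Local Open Scope ring_scope.

Section MonoidDefs.
Variables (M : finType) (one : M) (mul : Monoid.law one).

Definition is_unitM (u : M) : bool :=
  [exists v : M, (mul u v == one) && (mul v u == one)].

Definition irreducibleM (p : M) : bool :=
  ~~ is_unitM p &&
  [forall a : M, forall b : M, (p == mul a b) ==> (is_unitM a || is_unitM b)].

Definition associatesM (a b : M) : bool :=
  [exists u : M, exists v : M,
     [&& is_unitM u, is_unitM v & a == mul u (mul b v)]].
End MonoidDefs.

Section Target.
Variable k : fieldType.

Definition varx : {mpoly k[2]} := 'X_(@Ordinal 2 0 isT).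
Definition vary : {mpoly k[2]} := 'X_(@Ordinal 2 1 isT).

Definition in_idealI (P : {mpoly k[2]}) : Prop :=
  exists a b c : {mpoly k[2]},
    P = a * (varx * varx) + b * (vary * vary) + c * (varx * vary).

Definition eqmodI (P Q : {mpoly k[2]}) : Prop := in_idealI (P - Q).
End Target.

Section MapDefs.
Variables (M : finType) (one : M) (mul : Monoid.law one) (k : fieldType).
Variables (p q : M).

(* f : M -> k[x,y]/<x^2,y^2,xy>, given by representatives in k[x,y]. *)
Definition fmap (m : M) : {mpoly k[2]} :=
  if is_unitM mul m then 1
  else if associatesM mul m p then varx k
  else if associatesM mul m q then vary k
  else 0.

(* The monoid algebra kM: since M is finite, its elements are all
   functions M -> k, with convolution product and unit delta_one. *)
Definition kM_mul (a b : {ffun M -> k}) : {ffun M -> k} :=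
  [ffun m => \sum_(u : M) \sum_(v : M | mul u v == m) a u * b v].

Definition kM_delta (m : M) : {ffun M -> k} :=
  [ffun m' => if m' == m then 1 else 0].

Definition Fmap (a : {ffun M -> k}) : {mpoly k[2]} :=
  \sum_(m : M) a m *: fmap m.
End MapDefs.

Arguments is_unitM {M one} mul u.
Arguments irreducibleM {M one} mul p.
Arguments associatesM {M one} mul a b.
Arguments fmap {M one} mul k p q m.
Arguments kM_mul {M one} mul {k} a b.
Arguments kM_delta {M} k m.
Arguments Fmap {M one} mul k p q a.

(* Main.v *)
Require Import Defs.
From HB Require Import structures.
From mathcomp Require Import all_boot all_order all_algebra.
From mathcomp Require Import mpoly.
From mathcomp Require Import ring.
Import GRing.Theory.
Local Open Scope ring_scope.
Set Implicit Arguments. Unset Strict Implicit.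

Section Mon.
Variables (M : finType) (one : M) (mul : Monoid.law one).
Local Notation "a ** b" := (mul a b) (at level 40, left associativity).
Local Notation unit := (is_unitM mul).
Local Notation assoc := (associatesM mul).

Lemma mmulA a b c : a ** (b ** c) = a ** b ** c. Proof. exact: Monoid.mulmA. Qed.
Lemma mmul1 a : one ** a = a. Proof. exact: Monoid.mul1m. Qed.
Lemma mmul1r a : a ** one = a. Proof. exact: Monoid.mulm1. Qed.

Lemma fin_inv a b : a ** b = one -> b ** a = one.
Proof.
move=> ab.
have hK : cancel (mul b) (mul a) by move=> x; rewrite mmulA ab mmul1.
have [h' h1 h2] := injF_bij (can_inj hK).
have E x : a ** x = h' x by rewrite -{1}(h2 x) hK.
have := h2 one; by rewrite -E mmul1r.
Qed.

Lemma unitP u : reflect (exists v, u ** v = one /\ v ** u = one) (unit u).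
Proof.
apply: (iffP existsP) => [[v /andP[/eqP h1 /eqP h2]]|[v [h1 h2]]]; exists v => //.
by rewrite h1 h2 !eqxx.
Qed.

Lemma unit1 : unit one. Proof. by apply/unitP; exists one; rewrite mmul1. Qed.

Lemma unitM a b : unit a -> unit b -> unit (a ** b).
Proof.
move=> /unitP[a' [a1 a2]] /unitP[b' [b1 b2]]; apply/unitP; exists (b' ** a'); split.
  by rewrite -mmulA (mmulA b) b1 mmul1.
by rewrite -mmulA (mmulA a') a2 mmul1.
Qed.

Lemma unitMl a b : unit (a ** b) -> unit a.
Proof.
move=> /unitP[w [h1 _]]; apply/unitP; exists (b ** w); split; first by rewrite mmulA.
by apply: fin_inv; rewrite mmulA.
Qed.

Lemma unitMr a b : unit (a ** b) -> unit b.
Proof.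
move=> /unitP[w [_ h2]]; apply/unitP; exists (w ** a); split; last by rewrite -mmulA.
by apply: fin_inv; rewrite -mmulA.
Qed.

Lemma assocP a b : reflect (exists u v, [/\ unit u, unit v & a = u ** (b ** v)]) (assoc a b).
Proof.
apply: (iffP existsP) => [[u /existsP[v /and3P[h1 h2 /eqP h3]]]|[u [v [h1 h2 h3]]]].
  by exists u, v.
by exists u; apply/existsP; exists v; rewrite h1 h2 h3 eqxx.
Qed.

Lemma unit_inv u : unit u -> exists u', [/\ unit u', u ** u' = one & u' ** u = one].
Proof.
move=> /unitP[v [h1 h2]]; exists v; split => //; apply/unitP; by exists u.
Qed.

Lemma assoc_refl a : assoc a a.
Proof. apply/assocP; exists one, one; by rewrite unit1 mmul1 mmul1r. Qed.

Lemma assoc_sym a b : assoc a b -> assoc b a.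
Proof.
move=> /assocP[u [v [hu hv ->]]].
have [u' [hu' e1 e2]] := unit_inv hu; have [v' [hv' f1 f2]] := unit_inv hv.
apply/assocP; exists u', v'; split => //.
by rewrite !mmulA e2 mmul1 -mmulA f1 mmul1r.
Qed.

Lemma assoc_trans a b c : assoc a b -> assoc b c -> assoc a c.
Proof.
move=> /assocP[u [v [hu hv ->]]] /assocP[u' [v' [hu' hv' ->]]].
apply/assocP; exists (u ** u'), (v' ** v); split; try exact: unitM.
by rewrite !mmulA.
Qed.

Lemma assoc_unit a b : unit a -> assoc b a -> unit b.
Proof.
move=> ha /assocP[u [v [hu hv ->]]]; by apply: unitM => //; apply: unitM.
Qed.

Lemma unit_assocl m m' p : unit m -> assoc (m ** m') p = assoc m' p.
Proof.
move=> hm; have [m1 [hm1 e1 e2]] := unit_inv hm.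
apply/idP/idP => /assocP[u [v [hu hv h]]]; apply/assocP.
  exists (m1 ** u), v; split => //; first exact: unitM.
  by rewrite -mmulA -h mmulA e2 mmul1.
exists (m ** u), v; split => //; first exact: unitM.
by rewrite h !mmulA.
Qed.

Lemma unit_assocr m m' p : unit m' -> assoc (m ** m') p = assoc m p.
Proof.
move=> hm; have [m1 [hm1 e1 e2]] := unit_inv hm.
apply/idP/idP => /assocP[u [v [hu hv h]]]; apply/assocP.
  exists u, (v ** m1); split => //; first exact: unitM.
  by rewrite (mmulA p) mmulA -h -mmulA e1 mmul1r.
exists u, (v ** m'); split => //; first exact: unitM.
by rewrite h !mmulA.
Qed.

Lemma unit_unitl m m' : unit m -> unit (m ** m') = unit m'.
Proof.
move=> hm; apply/idP/idP; first exact: unitMr.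
by move=> h; apply: unitM.
Qed.

Lemma unit_unitr m m' : unit m' -> unit (m ** m') = unit m.
Proof.
move=> hm; apply/idP/idP; first exact: unitMl.
by move=> h; apply: unitM.
Qed.

Lemma irr_nassoc m m' p : irreducibleM mul p -> ~~ unit m -> ~~ unit m' ->
  ~~ assoc (m ** m') p.
Proof.
move=> /andP[_ /forallP irr] hm hm'; apply/negP => /assoc_sym /assocP[u [v [hu hv h]]].
have [u' [hu' e1 e2]] := unit_inv hu; have [v' [hv' f1 f2]] := unit_inv hv.
have := forallP (irr (u ** m)) (m' ** v).
rewrite h !mmulA eqxx /= => /orP[/unitMr|/unitMl]; by move/negP: hm; move/negP: hm'.
Qed.
End Mon.
Section Poly.
Variable k : fieldType.
Local Notation I := (@in_idealI k).
Local Notation x := (varx k).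
Local Notation y := (vary k).

Lemma I0 : I 0. Proof. by exists 0, 0, 0; rewrite !mul0r !addr0. Qed.
Lemma ID (P Q : {mpoly k[2]}) : I P -> I Q -> I (P + Q).
Proof.
move=> [a [b [c ->]]] [a' [b' [c' ->]]]; exists (a + a'), (b + b'), (c + c').
ring.
Qed.
Lemma IM (P Q : {mpoly k[2]}) : I P -> I (Q * P).
Proof.
move=> [a [b [c ->]]]; exists (Q * a), (Q * b), (Q * c); ring.
Qed.
Lemma IZ c (P : {mpoly k[2]}) : I P -> I (c *: P).
Proof. by move=> h; rewrite -mul_mpolyC; apply: IM. Qed.
Lemma IN (P : {mpoly k[2]}) : I P -> I (- P).
Proof. by move=> h; rewrite -mulN1r; apply: IM. Qed.

Lemma eqm_refl (P : {mpoly k[2]}) : eqmodI P P. Proof. by rewrite /eqmodI subrr; exact: I0. Qed.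
Lemma eqm_sym (P Q : {mpoly k[2]}) : eqmodI P Q -> eqmodI Q P.
Proof. by rewrite /eqmodI => /IN; rewrite opprB. Qed.
Lemma eqm_trans (P Q R : {mpoly k[2]}) : eqmodI P Q -> eqmodI Q R -> eqmodI P R.
Proof.
rewrite /eqmodI => h1 h2; have := ID h1 h2; by rewrite addrA subrK.
Qed.
Lemma eqm_sum (J : finType) (F G : J -> {mpoly k[2]}) :
  (forall i, eqmodI (F i) (G i)) -> eqmodI (\sum_i F i) (\sum_i G i).
Proof.
move=> h; rewrite /eqmodI -sumrB; apply: big_ind; [exact: I0|exact: ID|move=> i _; exact: h].
Qed.
Lemma eqm_scale c (P Q : {mpoly k[2]}) : eqmodI P Q -> eqmodI (c *: P) (c *: Q).
Proof. by rewrite /eqmodI -scalerBr; apply: IZ. Qed.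

Definition lin (c0 c1 c2 : k) : {mpoly k[2]} := c0%:MP + c1%:MP * x + c2%:MP * y.
Definition S (P : {mpoly k[2]}) := exists c0 c1 c2, eqmodI P (lin c0 c1 c2).

Lemma SD (P Q : {mpoly k[2]}) : S P -> S Q -> S (P + Q).
Proof.
move=> [c0 [c1 [c2 h]]] [d0 [d1 [d2 h']]]; exists (c0 + d0), (c1 + d1), (c2 + d2).
move: (ID h h'); rewrite /eqmodI /lin !mpolyCD.
have -> : P - (c0%:MP + c1%:MP * x + c2%:MP * y) +
    (Q - (d0%:MP + d1%:MP * x + d2%:MP * y)) =
    P + Q - ((c0%:MP + d0%:MP) + (c1%:MP + d1%:MP) * x + (c2%:MP + d2%:MP) * y) by ring.
done.
Qed.

Lemma SM (P Q : {mpoly k[2]}) : S P -> S Q -> S (P * Q).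
Proof.
move=> [c0 [c1 [c2 h]]] [d0 [d1 [d2 h']]].
exists (c0 * d0), (c0 * d1 + c1 * d0), (c0 * d2 + c2 * d0).
rewrite /eqmodI.
have e : P * Q - lin (c0 * d0) (c0 * d1 + c1 * d0) (c0 * d2 + c2 * d0) =
  Q * (P - lin c0 c1 c2) + lin c0 c1 c2 * (Q - lin d0 d1 d2) +
  ((c1%:MP * d1%:MP) * (x * x) + (c2%:MP * d2%:MP) * (y * y) +
   (c1%:MP * d2%:MP + c2%:MP * d1%:MP) * (x * y)).
  rewrite /lin !mpolyCD !mpolyCM; ring.
rewrite e; apply: ID; first apply: ID; try exact: IM.
by exists (c1%:MP * d1%:MP), (c2%:MP * d2%:MP), (c1%:MP * d2%:MP + c2%:MP * d1%:MP).
Qed.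

Lemma SC c : S c%:MP.
Proof. exists c, 0, 0; rewrite /lin !mpolyC0 !mul0r !addr0; exact: eqm_refl. Qed.

Lemma SX (i : 'I_2) : S 'X_i.
Proof.
case: i => [[|[|n]] Hi].
- exists 0, 1, 0; rewrite /lin !mpolyC0 mpolyC1 mul0r mul1r addr0 add0r.
  have -> : (Ordinal Hi) = (@Ordinal 2 0 isT) by apply: val_inj.
  exact: eqm_refl.
- exists 0, 0, 1; rewrite /lin !mpolyC0 mpolyC1 !mul0r mul1r !add0r.
  have -> : (Ordinal Hi) = (@Ordinal 2 1 isT) by apply: val_inj.
  exact: eqm_refl.
- by [].
Qed.

Lemma Sall (P : {mpoly k[2]}) : S P.
Proof.
rewrite (mpolyE P); apply: big_ind; [exact: (SC 0)|exact: SD|].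
move=> m _; rewrite -mul_mpolyC; apply: SM; first exact: SC.
rewrite mpolyXE_id; apply: big_ind; [exact: (SC 1)|exact: SM|].
move=> i _; elim: (m i) => [|n IH]; first exact: (SC 1).
by rewrite exprS; apply: SM => //; exact: SX.
Qed.
End Poly.

Lemma Iprod (k : fieldType) (P Q : {mpoly k[2]}) :
  [\/ P = varx k, P = vary k | P = 0] -> [\/ Q = varx k, Q = vary k | Q = 0] ->
  in_idealI (P * Q).
Proof.
move=> hP hQ.
case: hP => ->; case: hQ => ->; rewrite ?mul0r ?mulr0; try exact: I0.
- by exists 1, 0, 0; ring.
- by exists 0, 0, 1; ring.
- by exists 0, 0, 1; ring.
- by exists 0, 1, 0; ring.
Qed.

Theorem lemma1 (M : finType) (one : M) (mul : Monoid.law one) (k : fieldType)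
    (p q : M) :
  irreducibleM mul p -> irreducibleM mul q -> ~~ associatesM mul p q ->
  (* well-definedness: the defining cases are mutually exclusive *)
  (forall m : M,
     ~~ (is_unitM mul m && associatesM mul m p) /\
     ~~ (is_unitM mul m && associatesM mul m q) /\
     ~~ (associatesM mul m p && associatesM mul m q)) /\
  (* f is a monoid homomorphism into k[x,y]/<x^2,y^2,xy> *)
  eqmodI (fmap mul k p q one) 1 /\
  (forall m m' : M,
     eqmodI (fmap mul k p q (mul m m')) (fmap mul k p q m * fmap mul k p q m')) /\
  (* the induced map kM -> k[x,y]/<x^2,y^2,xy> extends f ... *)
  (forall m : M, Fmap mul k p q (@kM_delta M k m) = fmap mul k p q m) /\
  (* ... and is a k-algebra homomorphism ... *)
  (forall a b : {ffun M -> k},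
     Fmap mul k p q (a + b) = Fmap mul k p q a + Fmap mul k p q b) /\
  (forall (c : k) (a : {ffun M -> k}),
     Fmap mul k p q [ffun m => c * a m] = c *: Fmap mul k p q a) /\
  eqmodI (Fmap mul k p q (@kM_delta M k one)) 1 /\
  (forall a b : {ffun M -> k},
     eqmodI (Fmap mul k p q (kM_mul mul a b))
            (Fmap mul k p q a * Fmap mul k p q b)) /\
  (* ... which is surjective *)
  (forall P : {mpoly k[2]}, exists a : {ffun M -> k},
     eqmodI (Fmap mul k p q a) P).
Proof.
move=> hp hq npq.
have nup : ~~ is_unitM mul p by case/andP: hp.
have nuq : ~~ is_unitM mul q by case/andP: hq.
have f1 : fmap mul k p q one = 1 by rewrite /fmap unit1.
have fp : fmap mul k p q p = varx k by rewrite /fmap (negbTE nup) assoc_refl.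
have fq : fmap mul k p q q = vary k.
  rewrite /fmap (negbTE nuq) assoc_refl.
  have -> : associatesM mul q p = false.
    by apply/negbTE/negP => /assoc_sym h; move/negP: npq.
  by [].
have wd : forall m : M,
     ~~ (is_unitM mul m && associatesM mul m p) /\
     ~~ (is_unitM mul m && associatesM mul m q) /\
     ~~ (associatesM mul m p && associatesM mul m q).
  move=> m; split; [|split]; apply/negP.
  - by case/andP => hm /assoc_sym /(assoc_unit hm); apply/negP.
  - by case/andP => hm /assoc_sym /(assoc_unit hm); apply/negP.
  - case/andP => /assoc_sym h1 h2; move/negP: npq; apply.
    exact: assoc_trans h1 h2.
have form : forall m, ~~ is_unitM mul m ->
    [\/ fmap mul k p q m = varx k, fmap mul k p q m = vary k | fmap mul k p q m = 0].
  move=> m hm; rewrite /fmap (negbTE hm).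
  by case: ifP => _; [apply: Or31|case: ifP => _; [apply: Or32|apply: Or33]].
have hom : forall m m' : M,
     eqmodI (fmap mul k p q (mul m m')) (fmap mul k p q m * fmap mul k p q m').
  move=> m m'.
  case hm: (is_unitM mul m); case hm': (is_unitM mul m').
  - by rewrite /fmap (unitM hm hm') hm hm' mulr1; exact: eqm_refl.
  - rewrite {1 2}/fmap (unit_unitl _ hm) (unit_assocl _ _ hm) (unit_assocl _ _ hm) hm mul1r.
    exact: eqm_refl.
  - rewrite {1 3}/fmap (unit_unitr _ hm') (unit_assocr _ _ hm') (unit_assocr _ _ hm') hm' mulr1.
    exact: eqm_refl.
  - have n1 : ~~ is_unitM mul m by rewrite hm.
    have n2 : ~~ is_unitM mul m' by rewrite hm'.
    have -> : fmap mul k p q (mul m m') = 0.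
      rewrite /fmap.
      have -> : is_unitM mul (mul m m') = false.
        by apply/negbTE/negP => /unitMl; apply/negP.
      by rewrite (negbTE (irr_nassoc hp n1 n2)) (negbTE (irr_nassoc hq n1 n2)).
    rewrite /eqmodI sub0r; apply: IN; apply: Iprod; exact: form.
have Fdelta : forall m : M, Fmap mul k p q (@kM_delta M k m) = fmap mul k p q m.
  move=> m; rewrite /Fmap (bigD1 m) //= ffunE eqxx scale1r big1 ?addr0 //.
  by move=> m' /negbTE ne; rewrite ffunE ne scale0r.
have Fadd : forall a b : {ffun M -> k},
     Fmap mul k p q (a + b) = Fmap mul k p q a + Fmap mul k p q b.
  by move=> a b; rewrite /Fmap -big_split; apply: eq_bigr => m _; rewrite ffunE scalerDl.
have Fscale : forall (c : k) (a : {ffun M -> k}),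
     Fmap mul k p q [ffun m => c * a m] = c *: Fmap mul k p q a.
  by move=> c a; rewrite /Fmap scaler_sumr; apply: eq_bigr => m _; rewrite ffunE scalerA.
split => //; split; first by rewrite f1; exact: eqm_refl.
split => //; split => //; split => //; split => //.
split; first by rewrite Fdelta f1; exact: eqm_refl.
split.
  move=> a b.
  have E1 : Fmap mul k p q (kM_mul mul a b) =
      \sum_u \sum_v (a u * b v) *: fmap mul k p q (mul u v).
    rewrite /Fmap.
    under eq_bigr => m _ do rewrite ffunE scaler_suml.
    rewrite exchange_big; apply: eq_bigr => u _.
    under eq_bigr => m _ do rewrite scaler_suml.
    rewrite (exchange_big_dep xpredT) //=; apply: eq_bigr => v _.
    by rewrite (big_pred1 (mul u v)) // => m; rewrite /= eq_sym.
  have E2 : Fmap mul k p q a * Fmap mul k p q b =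
      \sum_u \sum_v (a u * b v) *: (fmap mul k p q u * fmap mul k p q v).
    rewrite /Fmap mulr_suml; apply: eq_bigr => u _; rewrite mulr_sumr.
    by apply: eq_bigr => v _; rewrite -scalerAl -scalerAr scalerA.
  rewrite E1 E2; apply: eqm_sum => u; apply: eqm_sum => v; apply: eqm_scale; exact: hom.
move=> P; have [c0 [c1 [c2 h]]] := Sall P.
exists ([ffun m => c0 * kM_delta k one m] + [ffun m => c1 * kM_delta k p m]
        + [ffun m => c2 * kM_delta k q m]).
rewrite !Fadd !Fscale !Fdelta f1 fp fq; apply: eqm_sym.
by move: h; rewrite /lin !mul_mpolyC -alg_mpolyC.
Qed.
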